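(* Let $\mathcal X$ be finite with $|\mathcal X|\ge n\ge1$, $s:2^{\mathcal X}\to\mathbb R$ non-negative, monotone and submodular, $d$ a metric on $\mathcal X$ with sum-dispersion $\mathrm{div}$, $\lambda>0$, $\alpha\in(0,1]$. If $B_n$ is the output of an $\alpha$-approximate greedy run for $\tilde a=\tfrac12s+\lambda\,\mathrm{div}$ with cardinality $n$, then $a(B_n)\ge\frac\alpha2\max_{B\subseteq\mathcal X,|B|=n}a(B)$, where $a=s+\lambda\,\mathrm{div}$.
   Context: Marginal gain: $\Delta_f(x\mid B):=f(B\cup\{x\})-f(B)$. $s$ is monotone if $\Delta_s(x\mid B)\ge0$ for all $B$, $x\notin B$; non-negative if $s\ge0$; submodular if $\Delta_s(x\mid B')\ge\Delta_s(x\mid B)$ for all $B'\subseteq B\subseteq\mathcal X$ and $x\in\mathcal X\setminus B$. Sum-dispersion: $\mathrm{div}(B):=\frac12\sum_{x\in B}\sum_{x'\in B}d(x,x')$. An $\alpha$-approximate greedy run for $f$ with cardinality $n$: $B_0=\emptyset$ and for $i=0,\dots,n-1$ an element $x_i\in\mathcal X\setminus B_i$ is chosen with $\Delta_f(x_i\mid B_i)\ge\alpha\max_{x\in\mathcal X\setminus B_i}\Delta_f(x\mid B_i)$, and $B_{i+1}=B_i\cup\{x_i\}$; its output is $B_n$. *)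

(* Defs.v *)
From mathcomp Require Import all_boot all_order all_algebra.
Set Implicit Arguments. Unset Strict Implicit. Unset Printing Implicit Defensive.
Import Order.TTheory GRing.Theory Num.Theory.
Local Open Scope ring_scope.

Section Defs.
Variables (R : realFieldType) (X : finType).

Definition marg (f : {set X} -> R) (x : X) (B : {set X}) : R :=
  f (x |: B) - f B.

Definition set_monotone (f : {set X} -> R) : Prop :=
  forall (B : {set X}) (x : X), x \notin B -> 0 <= marg f x B.

Definition set_nonneg (f : {set X} -> R) : Prop := forall B, 0 <= f B.

Definition submodular (f : {set X} -> R) : Prop :=
  forall (B' B : {set X}) (x : X), B' \subset B -> x \notin B ->
    marg f x B <= marg f x B'.

Definition is_metric (d : X -> X -> R) : Prop :=
  [/\ forall x y, d x y = 0 <-> x = y,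
      forall x y, d x y = d y x &
      forall x y z, d x z <= d x y + d y z].

Definition div (d : X -> X -> R) (B : {set X}) : R :=
  2^-1 * \sum_(x in B) \sum_(x' in B) d x x'.

Definition greedyB (x : nat -> X) (i : nat) : {set X} :=
  [set x (nat_of_ord j) | j : 'I_i].

(* x is an alpha-approximate greedy run for f with cardinality n:
   for each i < n, x_i is not in B_i and
   Delta_f(x_i | B_i) >= alpha * max_{y notin B_i} Delta_f(y | B_i)
   (the max written out: it is >= alpha * Delta_f(y|B_i) for every y notin B_i). *)
Definition approx_greedy_run (f : {set X} -> R) (alpha : R) (n : nat)
    (x : nat -> X) : Prop :=
  forall i, (i < n)%N ->
    x i \notin greedyB x i /\
    forall y, y \notin greedyB x i ->
      alpha * marg f y (greedyB x i) <= marg f (x i) (greedyB x i).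

End Defs.

(* Main.v *)
Require Import Defs.
From mathcomp Require Import all_boot all_order all_algebra.
From mathcomp Require Import ring lra zify.
From Stdlib Require Import Lia.
Import Order.TTheory GRing.Theory Num.Theory.
Local Open Scope ring_scope.
Set Implicit Arguments. Unset Strict Implicit.

Definition TT (R : realFieldType) (X : finType) (d : X -> X -> R) (A B : {set X}) : R :=
  \sum_(u in A) \sum_(v in B) d u v.

Lemma d_ge0 (R : realFieldType) (X : finType) (d : X -> X -> R) :
  is_metric d -> forall x y, 0 <= d x y.
Proof.
case=> h0 hs ht x y.
have := ht x y x. rewrite (hs y x) (proj2 (h0 x x) erefl). lra.
Qed.

Lemma dxx (R : realFieldType) (X : finType) (d : X -> X -> R) :
  is_metric d -> forall x, d x x = 0.
Proof. by case=> h0 _ _ x; apply/h0. Qed.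

Lemma TT_ge0 (R : realFieldType) (X : finType) (d : X -> X -> R) A B :
  is_metric d -> 0 <= TT d A B.
Proof.
move=> hd; apply: sumr_ge0 => u _; apply: sumr_ge0 => v _; exact: d_ge0.
Qed.

Lemma TT_sym (R : realFieldType) (X : finType) (d : X -> X -> R) A B :
  is_metric d -> TT d A B = TT d B A.
Proof.
case=> _ hs _; rewrite /TT exchange_big /=.
by apply: eq_bigr => u _; apply: eq_bigr => v _; rewrite hs.
Qed.

Lemma L_point (R : realFieldType) (X : finType) (d : X -> X -> R) (A : {set X}) x y :
  is_metric d -> x \in A ->
  2 * d x y <= \sum_(x' in A) (d x y + d y x' - d x x').
Proof.
move=> hd xA; rewrite (big_setD1 x) //=.
have [_ hs ht] := hd.
rewrite (dxx hd) (hs y x).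
have : 0 <= \sum_(i in A :\ x) (d x y + d y i - d x i).
  apply: sumr_ge0 => i _; have := ht x y i; lra.
lra.
Qed.

Lemma L_main (R : realFieldType) (X : finType) (d : X -> X -> R) (A B : {set X}) :
  is_metric d ->
  #|B|%:R * TT d A A <= 2 * (#|A|%:R - 1) * TT d A B.
Proof.
move=> hd; have [_ hs _] := hd.
have step : forall y, TT d A A <= 2 * (#|A|%:R - 1) * \sum_(x in A) d x y.
  move=> y.
  have H1 : \sum_(x in A) 2 * d x y <=
            \sum_(x in A) \sum_(x' in A) (d x y + d y x' - d x x').
    by apply: ler_sum => x xA; apply: L_point.
  have E1 : \sum_(x in A) \sum_(x' in A) (d x y + d y x' - d x x') =
      #|A|%:R * \sum_(x in A) d x y + #|A|%:R * \sum_(x' in A) d y x' - TT d A A.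
    rewrite (eq_bigr (fun x => #|A|%:R * d x y + \sum_(x' in A) d y x' - \sum_(x' in A) d x x')); last first.
      by move=> x _; rewrite sumrB big_split /= sumr_const mulr_natl.
    rewrite sumrB big_split /= sumr_const -big_distrr /= -mulr_natl /TT.
    by rewrite !mulr1 !mulr_natl.
  have E2 : \sum_(x' in A) d y x' = \sum_(x in A) d x y.
    by apply: eq_bigr => x _; rewrite hs.
  rewrite -big_distrr /= E1 E2 in H1.
  lra.
rewrite mulr_natl -sumr_const.
apply: le_trans (ler_sum _ (fun y _ => step y)) _.
rewrite -big_distrr /= /TT exchange_big /=.
done.
Qed.
Lemma arith (R : realFieldType) (a b c tAA tCC x y : R) :
  0 <= a -> 0 <= b -> b + 1 <= c -> 0 <= x -> 0 <= y ->
  c * tAA <= 2 * (a - 1) * x ->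
  a * tCC <= 2 * (c - 1) * x ->
  b * tCC <= 2 * (c - 1) * y ->
  (a + b) * c * (2^-1 * (tAA + tCC + 2 * x)) <= (a + c) * (a + c - 1) * (x + y).
Proof.
move=> ha hb hbc hx hy h1 h2 h3.
have e1 := ler_wpM2l (addr_ge0 ha hb) h1.
have e2 : (c - b) * (a * tCC) <= (c - b) * (2 * (c - 1) * x).
  apply: ler_wpM2l => //; lra.
have e3 : (a + c) * (b * tCC) <= (a + c) * (2 * (c - 1) * y).
  apply: ler_wpM2l => //; lra.
have e4 : 0 <= (c - b) * a * x by apply: mulr_ge0 => //; apply: mulr_ge0 => //; lra.
have e5 : 0 <= (a + c) * a * y by apply: mulr_ge0 => //; apply: mulr_ge0 => //; lra.
have E : (a + b) * c * (2^-1 * (tAA + tCC + 2 * x)) =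
   2^-1 * ((a + b) * (c * tAA) + (c - b) * (a * tCC) + (a + c) * (b * tCC)) + (a+b) * c * x.
  by field.
rewrite E.
nra.
Qed.

Lemma TT_splitl (R : realFieldType) (X : finType) (d : X -> X -> R) A B Z :
  TT d A B = TT d (A :&: Z) B + TT d (A :\: Z) B.
Proof. by rewrite /TT (big_setID Z). Qed.

Lemma TT_splitr (R : realFieldType) (X : finType) (d : X -> X -> R) A B Z :
  TT d A B = TT d A (B :&: Z) + TT d A (B :\: Z).
Proof. by rewrite /TT -big_split; apply: eq_bigr => u _; rewrite (big_setID Z). Qed.

Lemma F2 (R : realFieldType) (X : finType) (d : X -> X -> R) (O G : {set X}) :
  is_metric d -> (#|G| < #|O|)%N ->
  #|G|%:R * #|O :\: G|%:R * div d O <= #|O|%:R * (#|O|%:R - 1) * TT d (O :\: G) G.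
Proof.
move=> hd hlt.
set A := O :&: G; set C := O :\: G; set B := G :\: O.
have hp : (#|A| + #|C| = #|O|)%N by rewrite /A /C cardsID.
have hi : (#|A| + #|B| = #|G|)%N by rewrite /A /B setIC cardsID.
have hdiv : div d O = 2^-1 * (TT d A A + TT d C C + 2 * TT d A C).
  rewrite /div -/(TT d O O) (TT_splitl d O O G) (TT_splitr d (O :&: G) O G) (TT_splitr d (O :\: G) O G).
  rewrite -/A -/C (TT_sym C A hd). congr (_ * _); ring.
have hCG : TT d C G = TT d C A + TT d C B.
  by rewrite (TT_splitr d C G O) /A setIC.
rewrite hdiv hCG -(TT_sym C A hd) -hp -hi !natrD.
apply: arith.
- exact: ler0n.
- exact: ler0n.
- rewrite natr1 ler_nat; rewrite -hp -hi in hlt; lia.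
- exact: TT_ge0.
- exact: TT_ge0.
- rewrite (TT_sym C A hd); exact: L_main.
- exact: L_main.
- exact: L_main.
Qed.

Lemma div_add (R : realFieldType) (X : finType) (d : X -> X -> R) (G : {set X}) y :
  is_metric d -> y \notin G ->
  div d (y |: G) = div d G + \sum_(z in G) d y z.
Proof.
move=> hd yG; have [_ hs _] := hd.
rewrite /div.
under eq_bigr => u _ do rewrite (big_setU1 _ yG) /=.
rewrite (big_setU1 _ yG) /= (dxx hd) add0r.
rewrite big_split /=.
have -> : \sum_(i in G) d i y = \sum_(z in G) d y z by apply: eq_bigr => u _; rewrite hs.
set S := \sum_(z in G) d y z; set T := \sum_(i in G) \sum_(v in G) d i v.
lra.
Qed.

Lemma mono_set (R : realFieldType) (X : finType) (s : {set X} -> R) :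
  set_monotone s -> forall A B : {set X}, A \subset B -> s A <= s B.
Proof.
move=> hm A B; move Hk: #|B :\: A| => k; elim: k B Hk => [|k IH] B Hk sAB.
  have /eqP : B :\: A = set0 by apply/cards0_eq.
  rewrite setD_eq0 => sBA. by rewrite (eqP (_ : A == B)) // eqEsubset sAB sBA.
have /card_gt0P [y yBA] : (0 < #|B :\: A|)%N by rewrite Hk.
move: (yBA); rewrite inE => /andP [yA yB].
have sAB' : A \subset B :\ y.
  apply/subsetP => z zA; rewrite !inE (subsetP sAB) // andbT.
  by apply/eqP => e; rewrite -e zA in yA.
have hk' : #|(B :\ y) :\: A| = k.
  have -> : (B :\ y) :\: A = (B :\: A) :\ y.
    by apply/setP => z; rewrite !inE; case: (z == y); case: (z \in A).
  by move: Hk; rewrite (cardsD1 y) yBA add1n => -[].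
have := IH _ hk' sAB'.
have := hm (B :\ y) y; rewrite /marg setD1K // !inE eqxx /= => h.
have := h erefl. lra.
Qed.

Lemma sub_sum (R : realFieldType) (X : finType) (s : {set X} -> R) :
  submodular s -> forall C G : {set X}, (forall y, y \in C -> y \notin G) ->
  s (G :|: C) - s G <= \sum_(y in C) marg s y G.
Proof.
move=> hsub C G; move Hk: #|C| => k; elim: k C Hk => [|k IH] C Hk hCG.
  have -> : C = set0 by apply/cards0_eq.
  by rewrite setU0 big_set0 subrr.
have /card_gt0P [y yC] : (0 < #|C|)%N by rewrite Hk.
rewrite (big_setD1 y yC) /=.
have hk' : #|C :\ y| = k by move: Hk; rewrite (cardsD1 y) yC add1n => -[].
have hCG' : forall z, z \in C :\ y -> z \notin G.
  by move=> z; rewrite inE => /andP [_ /hCG].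
have := IH _ hk' hCG'.
have E : G :|: C = y |: (G :|: (C :\ y)).
  by rewrite setUCA setD1K.
have yn : y \notin G :|: (C :\ y).
  by rewrite !inE eqxx /= orbF hCG.
have := hsub G (G :|: (C :\ y)) y (subsetUl _ _) yn.
rewrite /marg E. lra.
Qed.

Lemma gB0 (X : finType) (x : nat -> X) : greedyB x 0 = set0.
Proof. by apply/setP => z; rewrite inE; apply/imsetP => -[[j hj]]. Qed.

Lemma gBS (X : finType) (x : nat -> X) i : greedyB x i.+1 = x i |: greedyB x i.
Proof.
apply/setP => z; apply/imsetP/setU1P.
- case=> j _ ->; case: (ltnP j i) => h.
    by right; apply/imsetP; exists (Ordinal h).
  left; congr x; have := ltn_ord j; lia.
- case=> [->|/imsetP [j _ ->]].
    by exists ord_max.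
  by exists (widen_ord (leqnSn i) j).
Qed.

Lemma gB_sub (X : finType) (x : nat -> X) i j : (i <= j)%N -> greedyB x i \subset greedyB x j.
Proof.
move=> hij; apply/subsetP => z /imsetP [k _ ->].
have hk : (k < j)%N by have := ltn_ord k; lia.
by apply/imsetP; exists (Ordinal hk).
Qed.

Lemma arith2 (R : realFieldType) (p c g al la S D T K M : R) :
  0 < c -> c <= p -> 0 <= S -> S <= D -> 0 < al -> 0 < la ->
  K * c * M <= p * T -> al * (2^-1 * D + la * T) <= c * g ->
  al * (S + 2 * la * K * M) <= 2 * p * g.
Proof.
move=> hc hcp hS hSD hal hla hM hg.
rewrite -(ler_pM2l hc).
have e1 : 0 <= al * (p * (D - S)) by apply: mulr_ge0; [lra|apply: mulr_ge0; lra].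
have e2 : 0 <= al * ((p - c) * S) by apply: mulr_ge0; [lra|apply: mulr_ge0; lra].
have e3 : al * la * (K * c * M) <= al * la * (p * T).
  by apply: ler_wpM2l => //; apply: mulr_ge0; lra.
have E : c * (al * (S + 2 * la * K * M)) = al * c * S + 2 * (al * la * (K * c * M)).
  by ring.
rewrite E.
have E2 : c * (2 * p * g) = 2 * p * (c * g) by ring.
rewrite E2.
have e4 : 2 * p * (al * (2^-1 * D + la * T)) <= 2 * p * (c * g).
  by apply: ler_wpM2l => //; lra.
have E3 : 2 * p * (al * (2^-1 * D + la * T)) = al * (p * D) + 2 * (al * la * (p * T)).
  by field.
rewrite E3 in e4.
have E4 : al * (p * D) = al * (p * (D - S)) + al * ((p - c) * S) + al * c * S by ring.
lra.
Qed.

Lemma gB_card (R : realFieldType) (X : finType) (f : {set X} -> R) al n (x : nat -> X) :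
  approx_greedy_run f al n x -> forall i, (i <= n)%N -> #|greedyB x i| = i.
Proof.
move=> hrun; elim=> [|i IH] hi; first by rewrite gB0 cards0.
have [hx _] := hrun i hi.
by rewrite gBS cardsU1 hx IH // ltnW.
Qed.

Lemma div_set1 (R : realFieldType) (X : finType) (d : X -> X -> R) (O : {set X}) :
  is_metric d -> #|O| = 1%N -> div d O = 0.
Proof.
move=> hd /eqP /cards1P [o ->].
by rewrite /div !big_set1 (dxx hd) mulr0.
Qed.
Theorem mainTheorem13 (R : realFieldType) (X : finType) (n : nat)
    (s : {set X} -> R) (d : X -> X -> R) (lambda alpha : R)
    (x : nat -> X) :
  (1 <= n)%N -> (n <= #|X|)%N ->
  set_nonneg s -> set_monotone s -> submodular s ->
  is_metric d -> 0 < lambda -> 0 < alpha -> alpha <= 1 ->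
  approx_greedy_run (fun B => 2^-1 * s B + lambda * div d B) alpha n x ->
  forall B : {set X}, #|B| = n ->
    alpha / 2 * (s B + lambda * div d B)
      <= s (greedyB x n) + lambda * div d (greedyB x n).
Proof.
move=> hn _ hnn hmon hsub hd hla hal hal1 hrun O hO.
set f := fun B : {set X} => 2^-1 * s B + lambda * div d B.
set Gn := greedyB x n.
set S := Num.max 0 (s O - s Gn).
set p : R := n%:R.
set M := div d O / (p - 1).
have hp : 0 < p by rewrite ltr0n.
have hcard := gB_card hrun.
have hS0 : 0 <= S by rewrite le_max lexx.
have hS1 : s O - s Gn <= S by rewrite le_max lexx orbT.
have hmarg : forall (G : {set X}) y, y \notin G ->
    marg f y G = 2^-1 * marg s y G + lambda * \sum_(z in G) d y z.
  move=> G y yG; rewrite /marg /f (div_add hd yG); ring.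
have claim : forall k, (k <= n)%N ->
    alpha * (k%:R * S + lambda * (k%:R * (k%:R - 1)) * M) <= 2 * p * f (greedyB x k).
  elim=> [|k IH] hk.
    rewrite gB0 /f /div big_set0 mulr0 mulr0 addr0 mul0r mul0r add0r mulr0.
    rewrite mul0r mulr0; apply: mulr_ge0; first by apply: mulr_ge0; lra.
    by apply: mulr_ge0; [rewrite invr_ge0; lra | apply: hnn].
  have hkn : (k < n)%N by [].
  have IH' := IH (ltnW hkn).
  set G := greedyB x k.
  set C := O :\: G.
  have hG : #|G| = k by apply: hcard; exact: ltnW.
  have [hxk hgr] := hrun k hkn.
  have hcO : (#|O :&: G| + #|C| = n)%N by rewrite /C cardsID.
  have hIG : (#|O :&: G| <= k)%N by rewrite -hG; apply: subset_leq_card; apply: subsetIr.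
  have hc1 : (1 <= #|C|)%N by lia.
  have hcn : (#|C| <= n)%N by lia.
  have hCG : forall y, y \in C -> y \notin G by move=> y; rewrite inE => /andP [].
  set g := marg f (x k) G.
  have hsum : alpha * (2^-1 * \sum_(y in C) marg s y G + lambda * TT d C G) <= #|C|%:R * g.
    have -> : 2^-1 * \sum_(y in C) marg s y G + lambda * TT d C G =
              \sum_(y in C) marg f y G.
      rewrite (eq_bigr _ (fun y yC => hmarg G y (hCG y yC))).
      by rewrite [RHS]big_split /= -!big_distrr.
    rewrite big_distrr /= (_ : #|C|%:R * g = \sum_(y in C) g); last by rewrite sumr_const mulr_natl.
    by apply: ler_sum => y yC; apply: hgr; apply: hCG.
  have hSD : S <= \sum_(y in C) marg s y G.
    rewrite ge_max; apply/andP; split.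
      by apply: sumr_ge0 => y yC; apply: hmon; apply: hCG.
    apply: le_trans (sub_sum hsub hCG).
    have h1 : s O <= s (G :|: C).
      apply: mono_set => //; apply/subsetP => z zO; rewrite !inE zO andbT.
      by case: (z \in G).
    have h2 : s G <= s Gn by apply: mono_set => //; apply: gB_sub; exact: ltnW.
    lra.
  have hF2 := F2 hd (_ : (#|G| < #|O|)%N).
  have hM : k%:R * #|C|%:R * M <= p * TT d C G.
    have hT : 0 <= TT d C G := TT_ge0 C G hd.
    case: (ltnP 1 n) => hn1.
      have hp1 : 0 < p - 1 by rewrite subr_gt0 /p ltr1n.
      have := hF2 ltac:(by rewrite hG hO).
      rewrite hG -/C hO -/p => h.
      have E : M * (p - 1) = div d O by rewrite /M divfK //; apply/lt0r_neq0.
      rewrite -(ler_pM2r hp1).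
      have E2 : k%:R * #|C|%:R * M * (p - 1) = k%:R * #|C|%:R * div d O.
        by rewrite -E; ring.
      rewrite E2; lra.
    have -> : k = 0%N by lia.
    rewrite mul0r mul0r; apply: mulr_ge0; lra.
  have hc0 : 0 < #|C|%:R :> R by rewrite ltr0n.
  have hcp : #|C|%:R <= p by rewrite ler_nat.
  have hstep := arith2 hc0 hcp hS0 hSD hal hla hM hsum.
  have Ef : f (greedyB x k.+1) = f G + g by rewrite /g /marg gBS -/G; ring.
  rewrite Ef -natr1.
  have E : alpha * ((k%:R + 1) * S + lambda * ((k%:R + 1) * (k%:R + 1 - 1)) * M) =
     alpha * (k%:R * S + lambda * (k%:R * (k%:R - 1)) * M) + alpha * (S + 2 * lambda * k%:R * M).
    by ring.
  rewrite E; lra.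
have hfin := claim n (leqnn n).
rewrite -/Gn -/p in hfin.
have EM : (p - 1) * M = div d O.
  case: (ltnP 1 n) => hn1.
    rewrite mulrC /M divfK //; apply/lt0r_neq0; by rewrite subr_gt0 /p ltr1n.
  have hn1' : n = 1%N by lia.
  by rewrite (div_set1 hd (_ : #|O| = 1%N)) /p ?hn1' ?subrr ?mul0r // hO.
have E : alpha * (p * S + lambda * (p * (p - 1)) * M) = p * (alpha * (S + lambda * ((p - 1) * M))).
  by ring.
rewrite E EM (_ : 2 * p * f Gn = p * (2 * f Gn)) in hfin; last by ring.
rewrite ler_pM2l // in hfin.
have hsG : 0 <= s Gn := hnn Gn.
have e1 : alpha * (s O - s Gn) <= alpha * S by apply: ler_wpM2l; lra.
have e2 : 0 <= (1 - alpha) * s Gn by apply: mulr_ge0; lra.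
rewrite /f in hfin.
lra.
Qed.
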